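(* The space $\tilde D$ with the metric $d_{\tilde D}$ is separable and complete.
   Context: $D=D([0,1],\mathbb R^d)$ is the space of càdlàg functions on $[0,1]$. $\tilde D=D/\!\sim$, where $x\sim y$ iff $x\circ\lambda=y$ for some continuous strictly increasing bijection $\lambda:[0,1]\to[0,1]$, and $d_{\tilde D}([x],[y])=\inf_\lambda\|x\circ\lambda-y\|_\infty$, the infimum over all such $\lambda$. *)

(* Defs.v *)
From HB Require Import structures.
From mathcomp Require Import all_boot all_order all_algebra.
From mathcomp Require Import all_classical all_reals all_analysis.
Set Implicit Arguments. Unset Strict Implicit. Unset Printing Implicit Defensive.
Import Order.TTheory GRing.Theory Num.Theory.
Import numFieldNormedType.Exports.
Local Open Scope classical_set_scope.
Local Open Scope ring_scope.

Section Skorokhod.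
Variables (R : realType) (d : nat).

(* elements of D are represented by functions R -> R^d; only their values on
   [0,1] matter (functions agreeing on [0,1] lie in the same class below). *)
Definition fn := R -> 'rV[R]_d.

Definition I01 : set R := [set` `[0, 1]].

Definition cadlag (x : fn) : Prop :=
  (forall t, 0 <= t -> t < 1 -> x s @[s --> t^'+] --> x t) /\
  (forall t, 0 < t -> t <= 1 -> cvg (x s @[s --> t^'-])).

Definition time_change (lam : R -> R) : Prop :=
  {within I01, continuous lam} /\
  (forall s t, I01 s -> I01 t -> s < t -> lam s < lam t) /\
  lam @` I01 = I01.

Definition tequiv (x y : fn) : Prop :=
  exists2 lam, time_change lam & forall t, I01 t -> x (lam t) = y t.

Definition supnorm (f : fn) : R := sup [set `|f t| | t in I01].

(* the quotient D/~ : a set of càdlàg functions which is the ~-class of some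
   càdlàg function *)
Record Dtilde := MkDtilde {
  cls : set fn ;
  clsP : exists x, cadlag x /\ cls = [set y | cadlag y /\ tequiv x y] }.

(* d([x],[y]) = inf_lam ||x o lam - y||_oo, the infimum taken over all time
   changes (and, equivalently, over all representatives of the two classes) *)
Definition dDt (A B : Dtilde) : R :=
  inf [set r | exists x y lam, [/\ cls A x, cls B y, time_change lam &
                   r = supnorm (fun t => x (lam t) - y t)]].
Arguments dDt : clear implicits.

Definition dDt_separable : Prop :=
  exists S : set Dtilde, countable S /\
    forall (A : Dtilde) (e : R), 0 < e -> exists2 B, S B & dDt A B < e.

Definition dDt_cauchy (u : nat -> Dtilde) : Prop :=
  forall e : R, 0 < e -> exists N : nat, forall m n : nat,
    (N <= m)%N -> (N <= n)%N -> dDt (u m) (u n) < e.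

Definition dDt_complete : Prop :=
  forall u : nat -> Dtilde, dDt_cauchy u ->
    exists A : Dtilde, dDt (u n) A @[n --> \oo] --> 0.

End Skorokhod.

(* Main.v *)
Require Import Defs.
From mathcomp Require Import all_boot all_order all_algebra.
From mathcomp Require Import all_classical all_reals all_analysis.
From mathcomp Require Import ring lra.
Set Implicit Arguments. Unset Strict Implicit. Unset Printing Implicit Defensive.
Import Order.TTheory GRing.Theory Num.Theory.
Import numFieldNormedType.Exports.
Local Open Scope classical_set_scope.
Local Open Scope ring_scope.
Section TC.
Variable R : realType.
Implicit Types (l m : R -> R) (s t : R).

Lemma I01E t : I01 t <-> 0 <= t <= 1.
Proof. by rewrite /I01 /= in_itv. Qed.

Lemma I01_0 : I01 (0:R). Proof. by apply/I01E; rewrite lexx ler01. Qed.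
Lemma I01_1 : I01 (1:R). Proof. by apply/I01E; rewrite lexx ler01. Qed.

Lemma tc_maps l t : time_change l -> I01 t -> I01 (l t).
Proof. by move=> [_ [_ E]] It; rewrite -E; exists t. Qed.

Lemma tc_mono l s t : time_change l -> I01 s -> I01 t -> s <= t -> l s <= l t.
Proof.
move=> [_ [M _]] Is It; rewrite le_eqVlt => /predU1P[->//|st].
exact/ltW/M.
Qed.

Lemma tc_0 l : time_change l -> l 0 = 0.
Proof.
move=> tl; have [_ [_ E]] := tl.
have : I01 (0:R) by exact: I01_0.
rewrite -E => -[s Is ls0].
have := tc_mono tl I01_0 Is (proj1 (andP (proj1 (I01E s) Is))).
rewrite ls0 => h; apply/eqP; rewrite eq_le h /=.
by have /I01E/andP[] := tc_maps tl I01_0.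
Qed.

Lemma tc_1 l : time_change l -> l 1 = 1.
Proof.
move=> tl; have [_ [_ E]] := tl.
have : I01 (1:R) by exact: I01_1.
rewrite -E => -[s Is ls0].
have := tc_mono tl Is I01_1 (proj2 (andP (proj1 (I01E s) Is))).
rewrite ls0 => h; apply/eqP; rewrite eq_le h /= andbT.
by have /I01E/andP[] := tc_maps tl I01_1.
Qed.

Lemma tc_lt1 l t : time_change l -> I01 t -> t < 1 -> l t < 1.
Proof. by move=> tl It t1; rewrite -(tc_1 tl); apply: (proj1 (proj2 tl)) => //; exact: I01_1. Qed.

Lemma tc_gt0 l t : time_change l -> I01 t -> 0 < t -> 0 < l t.
Proof. by move=> tl It t1; rewrite -(tc_0 tl); apply: (proj1 (proj2 tl)) => //; exact: I01_0. Qed.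

Lemma within_comp (A B : set R) l m : {within A, continuous m} -> {within B, continuous l} ->
  (forall y, A y -> B (m y)) -> {within A, continuous (l \o m)}.
Proof.
move=> cm cl AB; apply/subspace_continuousP => x Ax.
have hm := (@subspace_continuousP _ A _ m).1 cm x Ax.
have hl := (@subspace_continuousP _ B _ l).1 cl (m x) (AB _ Ax).
apply: cvg_comp hl => W /= HW.
have := hm _ HW; rewrite /within /= !nbhs_simpl /=.
by apply: filterS => y + Ay; apply => //; apply: AB.
Qed.

Lemma tc_id : time_change (@id R).
Proof.
split; first by apply: continuous_subspaceT => x; apply: cvg_id.
by split => //; rewrite image_id.
Qed.

Lemma tc_comp l m : time_change l -> time_change m -> time_change (l \o m).
Proof.
move=> tl tm; split; last split.
- by apply: within_comp (proj1 tm) (proj1 tl) _ => y; apply: tc_maps.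
- by move=> s t Is It st; apply: (proj1 (proj2 tl)); try apply: tc_maps => //; apply: (proj1 (proj2 tm)).
- by rewrite -image_comp (proj2 (proj2 tm)) (proj2 (proj2 tl)).
Qed.

Lemma tc_inj l s t : time_change l -> I01 s -> I01 t -> l s = l t -> s = t.
Proof.
move=> tl Is It e; case: (ltgtP s t) => // st.
- by have := proj1 (proj2 tl) _ _ Is It st; rewrite e ltxx.
- by have := proj1 (proj2 tl) _ _ It Is st; rewrite e ltxx.
Qed.

Lemma tc_inv l : time_change l -> exists m, [/\ time_change m,
  (forall t, I01 t -> l (m t) = t) & (forall t, I01 t -> m (l t) = t)].
Proof.
move=> tl.
have : forall t, exists s, I01 t -> I01 s /\ l s = t.
  move=> t; case: (pselect (I01 t)) => It; last by exists t => /It.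
  have [s Is ls] : (l @` (@I01 R)) t by rewrite (proj2 (proj2 tl)).
  by exists s.
move=> /choice[m Hm].
have lm t : I01 t -> l (m t) = t by move=> It; have [] := Hm t It.
have Im t : I01 t -> I01 (m t) by move=> It; have [] := Hm t It.
have ml t : I01 t -> m (l t) = t.
  move=> It; apply: (tc_inj tl) => //; [exact/Im/tc_maps | by rewrite lm //; exact: tc_maps].
exists m; split => //; split; last split.
- have := @segment_can_le_continuous R 0 1 l m ler01 (proj1 tl).
  rewrite (tc_0 tl) (tc_1 tl); apply => x xI; exact: ml.
- move=> s t Is It st; rewrite ltNge; apply/negP => ts.
  have := tc_mono tl (Im _ It) (Im _ Is) ts; rewrite !lm // => /(lt_le_trans st).
  by rewrite ltxx.
- apply/seteqP; split => [_ [t It <-]|t It]; first exact: Im.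
  by exists (l t); [exact: tc_maps | exact: ml].
Qed.

End TC.

Section C.
Variable R : realType.
Implicit Types (l m : R -> R) (s t : R).

Lemma tc_rcont l t : time_change l -> 0 <= t -> t < 1 -> l s @[s --> t^'+] --> l t.
Proof.
move=> [cl _] t0 t1; have := (continuous_within_itvP l (@ltr01 R)).1 cl.
case=> ci c0 _; move: t0; rewrite le_eqVlt => /predU1P[<-//|t0].
apply: cvg_at_right_filter; apply: ci; by rewrite in_itv /= t0 t1.
Qed.

Lemma tc_lcont l t : time_change l -> 0 < t -> t <= 1 -> l s @[s --> t^'-] --> l t.
Proof.
move=> [cl _] t0 t1; have := (continuous_within_itvP l (@ltr01 R)).1 cl.
case=> ci _ c1; move: t1; rewrite le_eqVlt => /predU1P[->//|t1].
apply: cvg_at_left_filter; apply: ci; by rewrite in_itv /= t0 t1.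
Qed.

Lemma tc_right l t : time_change l -> 0 <= t -> t < 1 -> l s @[s --> t^'+] --> (l t)^'+.
Proof.
move=> tl t0 t1 W HW; have := tc_rcont tl t0 t1 HW; rewrite /= !near_simpl.
apply: filter_app; near=> s => /=; apply.
apply: (proj1 (proj2 tl)); [by apply/I01E; rewrite t0 ltW | | ].

  apply/I01E; apply/andP; split; last by near: s; apply: nbhs_right_le.
  by apply: (le_trans t0); near: s; apply: nbhs_right_ge.
by near: s; apply: nbhs_right_gt.
Unshelve. all: by end_near. Qed.

Lemma tc_left l t : time_change l -> 0 < t -> t <= 1 -> l s @[s --> t^'-] --> (l t)^'-.
Proof.
move=> tl t0 t1 W HW; have := tc_lcont tl t0 t1 HW; rewrite /= !near_simpl.
apply: filter_app; near=> s => /=; apply.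
apply: (proj1 (proj2 tl)); [ | by apply/I01E; rewrite t1 ltW | ].
  apply/I01E; apply/andP; split; first by near: s; apply: nbhs_left_ge.
  by apply: (le_trans _ t1); near: s; apply: nbhs_left_le.
by near: s; apply: nbhs_left_lt.
Unshelve. all: by end_near. Qed.

Variable d : nat.

Lemma cadlag_comp (x : fn R d) l : cadlag x -> time_change l -> cadlag (x \o l).
Proof.
move=> [xr xl] tl; split.
- move=> t t0 t1; apply: cvg_comp (tc_right tl t0 t1) _.
  have It : I01 t by apply/I01E; rewrite t0 ltW.
  apply: xr; last exact: tc_lt1.
  by have /I01E/andP[] := tc_maps tl It.
- move=> t t0 t1; apply/cvg_ex; exists (lim (x s @[s --> (l t)^'-])).
  apply: cvg_comp (tc_left tl t0 t1) _.
  have It : I01 t by apply/I01E; rewrite t1 ltW.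
  apply: xl; first exact: tc_gt0.
  by have /I01E/andP[] := tc_maps tl It.
Qed.

End C.

Section B.
Variable R : realType.

Lemma near_left_ex (T : R) (Q : R -> Prop) : (\forall s \near T^'-, Q s) ->
  exists2 e, 0 < e & forall s, T - e < s -> s < T -> Q s.
Proof.
rewrite near_withinE => /nbhs_ballP[e /= e0 H]; exists e => // s h1 h2.
apply: H => //; rewrite /ball /= ger0_norm ?subr_ge0 ?ltW //.
by rewrite ltrBlDr addrC -ltrBlDr.
Qed.

Lemma near_right_ex (T : R) (Q : R -> Prop) : (\forall s \near T^'+, Q s) ->
  exists2 e, 0 < e & forall s, T < s -> s < T + e -> Q s.
Proof.
rewrite near_withinE => /nbhs_ballP[e /= e0 H]; exists e => // s h1 h2.
apply: H => //; rewrite /ball /= distrC ger0_norm ?subr_ge0 ?ltW //.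
by rewrite ltrBlDl.
Qed.

Variable d : nat.
Implicit Types (x : fn R d).

Definition partP x (e : R) (tau : R) := exists (k : nat) (tt : nat -> R),
  [/\ tt 0%N = 0, tt k = tau, (forall i, (i < k)%N -> tt i < tt i.+1) &
      (forall i s, (i < k)%N -> tt i <= s -> s < tt i.+1 -> `|x s - x (tt i)| <= e)].

Lemma partP0 x e : partP x e 0.
Proof. by exists 0%N, (fun _ => 0). Qed.

Lemma partP_ext x e tau tau' : partP x e tau -> tau < tau' ->
  (forall s, tau <= s -> s < tau' -> `|x s - x tau| <= e) -> partP x e tau'.
Proof.
move=> [k [tt [t0 tk tinc tb]]] tt' H.
exists k.+1, (fun i => if (i <= k)%N then tt i else tau'); split => /=.
- done.
- by rewrite ltnn.
- move=> i ik; rewrite -ltnS ik; case: (ltnP i k) => [ik'|ki]; first exact: tinc.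
  have -> : i = k by apply/eqP; rewrite eqn_leq ki -ltnS ik.
  by rewrite tk.
- move=> i s ik; rewrite -ltnS ik; case: (ltnP i k) => [ik'|ki]; first exact: tb.
  have -> : i = k by apply/eqP; rewrite eqn_leq ki -ltnS ik.
  by rewrite tk; apply: H.
Qed.

Lemma part_cadlag x e : cadlag x -> 0 < e -> partP x e 1.
Proof.
move=> [xr xl] e0.
pose S := [set tau : R | 0 <= tau <= 1 /\ partP x e tau].
have S0 : S 0 by split; [rewrite lexx ler01 | exact: partP0].
have Sub : forall tau, S tau -> tau <= 1 by move=> tau [/andP[]].
have hub : has_ubound S by exists 1 => tau /Sub.
have hS : S !=set0 by exists 0.
set T := sup S.
have T0 : 0 <= T by apply: ub_le_sup hub _ S0.
have T1 : T <= 1 by apply: ge_sup hS _ => tau /Sub.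
have le_T tau : S tau -> tau <= T by move=> St; apply: ub_le_sup hub _ St.
have PT : partP x e T.
  move: T0; rewrite le_eqVlt => /predU1P[<-|T0]; first exact: partP0.
  have /cvg_ex[L /cvgrPdist_lt HL] := xl T T0 T1.
  have e20 : 0 < e / 2 by rewrite divr_gt0.
  have [del del0 Hd] := near_left_ex (HL (e / 2) e20).
  have : T - del < T by rewrite ltrBlDr ltrDl.
  move=> /(sup_gt hS)[tau Stau Ttau].
  have := le_T _ Stau; case: Stau => _ Ptau.
  rewrite le_eqVlt => /predU1P[<-//|tT].
  apply: partP_ext Ptau (tT) _ => s h1 h2.
  apply: le_trans (ler_distD L _ _) _.
  rewrite [leRHS](splitr e) distrC; apply: lerD; apply: ltW; apply: Hd => //.
  - exact: lt_le_trans Ttau h1.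
have [//|T1'] := eqVneq T 1; first by move=> <-.
have {T1'}T1 : T < 1 by rewrite lt_neqAle T1' T1.
have /cvgrPdist_lt HR := xr T T0 T1.
have [del del0 Hd] := near_right_ex (HR e e0).
pose tau' := Num.min (T + del / 2) 1.
have del20 : 0 < del / 2 by rewrite divr_gt0.
have Ttau : T < tau' by rewrite lt_min T1 ltrDl del20.
have : S tau'.
  split; first by rewrite ge_min lexx orbT andbT le_min ler01 (le_trans T0) // lerDl ltW.
  apply: partP_ext PT Ttau _ => s h1 h2.
  move: h1; rewrite le_eqVlt => /predU1P[<-|h1]; first by rewrite subrr normr0 ltW.
  rewrite distrC ltW //; apply: Hd => //.
  apply: (lt_le_trans h2); rewrite ge_min lerD2l; apply/orP; left.
  by rewrite ler_pdivrMr // ler_peMr ?ltW // ?ltr1n ?ler1n.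
by move=> /le_T; rewrite leNgt Ttau.
Qed.

Lemma part_find (tt : nat -> R) k t : tt 0%N <= t -> t < tt k ->
  exists2 i, (i < k)%N & tt i <= t < tt i.+1.
Proof.
elim: k => [h1 h2|k IH h1 h2]; first by have := le_lt_trans h1 h2; rewrite ltxx.
case: (ltP t (tt k)) => tk.
  by have [i ik Hi] := IH h1 tk; exists i => //; apply: ltnW.
by exists k => //; rewrite tk h2.
Qed.

Lemma fin_max (f : nat -> R) k : exists M, forall i, (i <= k)%N -> f i <= M.
Proof.
elim: k => [|k [M HM]]; first by exists (f 0%N) => i; rewrite leqn0 => /eqP->.
exists (Num.max M (f k.+1)) => i; rewrite leq_eqVlt => /orP[/eqP->|ik].
  by rewrite le_max lexx orbT.
by rewrite le_max HM.
Qed.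

Definition bnd (f : fn R d) := exists M, forall t, I01 t -> `|f t| <= M.

Lemma cadlag_bnd x : cadlag x -> bnd x.
Proof.
move=> cx; have [k [tt [t0 tk tinc tb]]] := part_cadlag cx (@ltr01 R).
have [M HM] := fin_max (fun i => `|x (tt i)|) k.
exists (M + 1 + `|x 1|) => t /I01E/andP[t0' t1].
move: t1; rewrite le_eqVlt => /predU1P[->|t1].
  by rewrite lerDr addr_ge0 // (le_trans _ (HM 0%N _)).
have [i ik /andP[h1 h2]] : exists2 i, (i < k)%N & tt i <= t < tt i.+1.
  by apply: part_find; rewrite ?t0 ?tk.
apply: le_trans (_ : `|x t - x (tt i)| + `|x (tt i)| <= _).
  by rewrite -[x t in leLHS](subrK (x (tt i))) ler_normD.
rewrite -addrA [1 + _]addrC addrA [leRHS]addrC; apply: lerD; first exact: tb.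
by apply: le_trans (HM i (ltnW ik)) _; rewrite lerDl.
Qed.

End B.

Section D.
Variables (R : realType) (d : nat).
Implicit Types (x y z f g : fn R d) (A B C : Dtilde R d).

Lemma supnorm_le f e : (forall t, I01 t -> `|f t| <= e) -> supnorm f <= e.
Proof.
move=> H; apply: ge_sup; first by exists `|f 0|, 0 => //; exact: I01_0.
by move=> _ [t It <-]; apply: H.
Qed.

Lemma supnorm_ge f t : bnd f -> I01 t -> `|f t| <= supnorm f.
Proof.
move=> [M HM] It; apply: ub_le_sup; last by exists t.
by exists M => _ [s Is <-]; apply: HM.
Qed.

Lemma supnorm_ge0 f : 0 <= supnorm f.
Proof.
case: (pselect (has_ubound [set `|f t| | t in @I01 R])) => h.
  apply: le_trans (normr_ge0 (f 0)) _; apply: ub_le_sup h _ _.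
  by exists 0 => //; exact: I01_0.
by rewrite /supnorm sup_out // => -[_ h'].
Qed.

Lemma bnd_comp f l : bnd f -> time_change l -> bnd (f \o l).
Proof. by move=> [M HM] tl; exists M => t It; apply/HM/tc_maps. Qed.

Lemma bnd_sub f g : bnd f -> bnd g -> bnd (fun t => f t - g t).
Proof.
move=> [M HM] [N HN]; exists (M + N) => t It.
by apply: le_trans (ler_normB _ _) _; apply: lerD; [apply: HM|apply: HN].
Qed.

Lemma clsE A : exists2 r, cadlag r & forall y, cls A y <-> (cadlag y /\ tequiv r y).
Proof. by have [r [cr e]] := clsP A; exists r => // y; rewrite e. Qed.

Lemma cls_cadlag A y : cls A y -> cadlag y.
Proof. by have [r _ e] := clsE A; move/e => []. Qed.

Lemma tequiv_refl x : tequiv x x.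
Proof. by exists id => //; exact: tc_id. Qed.

Lemma cls_ne A : exists y, cls A y.
Proof. by have [r cr e] := clsE A; exists r; apply/e; split => //; exact: tequiv_refl. Qed.

Lemma cls_rel A y z : cls A y -> cls A z ->
  exists2 a, time_change a & forall t, I01 t -> z t = y (a t).
Proof.
have [r cr e] := clsE A; move=> /e[_ [b tb Hb]] /e[_ [g tg Hg]].
have [b' [tb' bb' _]] := tc_inv tb.
exists (b' \o g); first exact: tc_comp.
move=> t It /=; rewrite -Hg // -Hb ?bb' //; first exact: tc_maps.
by apply: (tc_maps tb'); apply: tc_maps.
Qed.

Lemma cls_comp A y l : cls A y -> time_change l -> cls A (y \o l).
Proof.
have [r cr e] := clsE A; move=> /e[cy [b tb Hb]] tl; apply/e; split; first exact: cadlag_comp.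
exists (b \o l); first exact: tc_comp.
by move=> t It /=; rewrite Hb //; apply: tc_maps.
Qed.

Lemma dDt_ne A B : [set r | exists x y lam, [/\ cls A x, cls B y, time_change lam &
                   r = supnorm (fun t => x (lam t) - y t)]] !=set0.
Proof.
have [x Ax] := cls_ne A; have [y By] := cls_ne B.
by eexists; exists x, y, id; split => //; exact: tc_id.
Qed.

Lemma dDt_ge0 A B : 0 <= dDt A B.
Proof.
apply: lb_le_inf; first exact: dDt_ne.
by move=> _ [x [y [l [_ _ _ ->]]]]; exact: supnorm_ge0.
Qed.

Lemma dDt_le A B x y l e : cls A x -> cls B y -> time_change l ->
  (forall t, I01 t -> `|x (l t) - y t| <= e) -> dDt A B <= e.
Proof.
move=> Ax By tl H; apply: le_trans (supnorm_le H).
apply: ge_inf; last by exists x, y, l.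
by exists 0 => _ [x' [y' [l' [_ _ _ ->]]]]; exact: supnorm_ge0.
Qed.

Lemma dDt_lt A B e : dDt A B < e -> exists x y l, [/\ cls A x, cls B y, time_change l &
  forall t, I01 t -> `|x (l t) - y t| <= e].
Proof.
move=> /(inf_lt (dDt_ne A B))[_ [x [y [l [Ax By tl ->]]]] lt].
exists x, y, l; split => // t It; apply: le_trans (ltW lt).
apply: (supnorm_ge (f := fun t => x (l t) - y t)) It.
apply: bnd_sub; last exact/cadlag_bnd/(cls_cadlag By).
exact/bnd_comp/tl/cadlag_bnd/(cls_cadlag Ax).
Qed.

Lemma transfer1 B C x x' l e y' : cls B x -> cls C x' -> time_change l ->
  (forall t, I01 t -> `|x (l t) - x' t| <= e) -> cls C y' ->
  exists z, cls B z /\ forall t, I01 t -> `|z t - y' t| <= e.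
Proof.
move=> Bx Cx' tl H Cy'; have [a ta Ha] := cls_rel Cx' Cy'.
exists (x \o (l \o a)); split; first by apply: cls_comp => //; exact: tc_comp.
by move=> t It; rewrite Ha //=; apply: H; apply: tc_maps.
Qed.

Lemma transfer2 B C x x' l e y : cls B x -> cls C x' -> time_change l ->
  (forall t, I01 t -> `|x (l t) - x' t| <= e) -> cls B y ->
  exists z, cls C z /\ forall t, I01 t -> `|y t - z t| <= e.
Proof.
move=> Bx Cx' tl H By; have [m [tm lm ml]] := tc_inv tl.
have H' : forall t, I01 t -> `|x' (m t) - x t| <= e.
  by move=> t It; rewrite distrC -{1}(lm t It); apply: H; apply: tc_maps.
have [z [Cz Hz]] := transfer1 Cx' Bx tm H' By.
by exists z; split => // t It; rewrite distrC; apply: Hz.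
Qed.

End D.

Section U.
Variables (R : realType) (d : nat).
Implicit Types (x y z f g : fn R d) (A B C : Dtilde R d).

Lemma dist3 (a b c e : 'rV[R]_d) : `|a - e| <= `|a - b| + `|b - c| + `|c - e|.
Proof.
apply: le_trans (ler_distD c _ _) _; rewrite lerD2r.
exact: ler_distD.
Qed.

Lemma unif_cadlag (Y : nat -> fn R d) y (w : nat -> R) :
  (forall k, cadlag (Y k)) -> (forall k t, I01 t -> `|Y k t - y t| <= w k) ->
  (forall e, 0 < e -> exists K, forall k, (K <= k)%N -> w k < e) -> cadlag y.
Proof.
move=> cY Hw hw; split.
- move=> t t0 t1; apply/cvgrPdist_lt => e e0.
  have e30 : 0 < e / 3 by rewrite divr_gt0.
  have [K HK] := hw _ e30; have wK := HK K (leqnn K).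
  have /cvgrPdist_lt HY := (cY K).1 t t0 t1.
  have It : I01 t by apply/I01E; rewrite t0 ltW.
  near=> s.
  have Is : I01 s.
    apply/I01E/andP; split; last by near: s; apply: nbhs_right_le.
    by apply: (le_trans t0); near: s; apply: nbhs_right_ge.
  apply: le_lt_trans (dist3 (y t) (Y K t) (Y K s) (y s)) _.
  rewrite [ltRHS](_ : e = e / 3 + e / 3 + e / 3); last first.
    by field.
  rewrite ltrD //; first rewrite ltrD //.
  - by rewrite distrC; apply: le_lt_trans (Hw K t It) wK.
  - by near: s; apply: HY.
  - by apply: le_lt_trans (Hw K s Is) wK.
- move=> t t0 t1.
  pose L k := lim (Y k s @[s --> t^'-]).
  have HL k : Y k s @[s --> t^'-] --> L k := (cY k).2 t t0 t1.
  have nI : \forall s \near t^'-, I01 s.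
    near=> s; apply/I01E/andP; split; first by near: s; apply: nbhs_left_ge.
    by apply: (le_trans _ t1); near: s; apply: nbhs_left_le.
  have HLL j k : `|L j - L k| <= w j + w k.
    apply/ler_addgt0Pr => e e0.
    have e20 : 0 < e / 2 by rewrite divr_gt0.
    have /cvgrPdist_lt/(_ _ e20) hj := HL j.
    have /cvgrPdist_lt/(_ _ e20) hk := HL k.
    have [s [Is h1 h2]] : exists s, [/\ I01 s, `|L j - Y j s| < e / 2 & `|L k - Y k s| < e / 2].
      apply: (@filter_ex _ (t^'-)); near=> s; split; [near: s; exact: nI| near: s; exact: hj| near: s; exact: hk].
    have h3 := dist3 (L j) (Y j s) (Y k s) (L k).
    have h4 : `|Y j s - Y k s| <= w j + w k.
      apply: le_trans (ler_distD (y s) _ _) _; apply: lerD; first exact: Hw.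
      by rewrite distrC; exact: Hw.
    rewrite distrC in h2; lra.
  have cL : cvg (L k @[k --> \oo]).
    apply: cauchy_cvg; apply: cauchy_exP => e e0.
    have e20 : 0 < e / 2 by rewrite divr_gt0.
    have [K HK] := hw _ e20.
    exists (L K); exists K => // k /= Kk.
    rewrite -ball_normE /ball_ /=.
    have := HLL K k; have := HK K (leqnn K); have := HK k Kk; lra.
  set Linf := lim (L k @[k --> \oo]).
  apply/cvg_ex; exists Linf; apply/cvgrPdist_lt => e e0.
  have e30 : 0 < e / 3 by rewrite divr_gt0.
  have [K HK] := hw _ e30.
  have /cvgrPdist_lt/(_ _ e30)[N _ HN] := cL.
  pose k := maxn K N.
  have wk := HK k (leq_maxl K N).
  have Lk : `|Linf - L k| < e / 3 by apply: HN; rewrite /= leq_maxr.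
  have /cvgrPdist_lt/(_ _ e30) hk := HL k.
  near=> s.
  have Is : I01 s by near: s; exact: nI.
  have h1 : `|L k - Y k s| < e / 3 by near: s; exact: hk.
  have h2 := Hw k s Is.
  have h3 := dist3 Linf (L k) (Y k s) (y s).
  lra.
Unshelve. all: by end_near. Qed.

Lemma dDt_completeP : dDt_complete R d.
Proof.
move=> u cu.
pose w k : R := (2^-1) ^+ k.
have w0 k : 0 < w k by rewrite exprn_gt0 // invr_gt0.
have wS k : w k.+1 = w k / 2 by rewrite /w exprSr.
have hw : forall e, 0 < e -> exists K, forall k, (K <= k)%N -> w k < e.
  move=> e e0.
  have : `|(2:R)^-1| < 1 by rewrite ger0_norm ?invr_ge0 // invf_lt1 // ltr1n.
  move=> /cvg_expr/cvgrPdist_lt/(_ _ e0)[K _ HK]; exists K => k Kk.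
  by have := HK k Kk; rewrite /= sub0r normrN ger0_norm // ltW.
have [N HN] : {N : nat -> nat & forall k m n, (N k <= m)%N -> (N k <= n)%N ->
    dDt (u m) (u n) < w k.+1}.
  apply: (@choice _ _ (fun k N => forall m n, (N <= m)%N -> (N <= n)%N ->
    dDt (u m) (u n) < w k.+1)) => k; exact: cu (w k.+1) (w0 _).
pose m k := (\sum_(i < k.+1) N i)%N.
have mS k : m k.+1 = (m k + N k.+1)%N by rewrite /m big_ord_recr.
have mk k : (N k <= m k)%N.
  by case: k => [|k]; rewrite ?mS ?leq_addl // /m big_ord_recr /= big_ord0.
have mk1 k : (N k <= m k.+1)%N by rewrite mS (leq_trans (mk k)) // leq_addr.
have step : forall p : nat * fn R d, exists y', cls (u (m p.1)) p.2 ->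
    cls (u (m p.1.+1)) y' /\ forall t, I01 t -> `|p.2 t - y' t| <= w p.1.+1.
  move=> [k y] /=; case: (pselect (cls (u (m k)) y)) => Hy; last by exists y.
  have [x [x' [l [Ax Bx' tl Hl]]]] := dDt_lt (HN k _ _ (mk k) (mk1 k)).
  have [z [Cz Hz]] := transfer2 Ax Bx' tl Hl Hy.
  by exists z.
have [F HF] := choice step.
have [y0 Hy0] := cls_ne (u (m 0%N)).
pose Y := fix Y k := if k is k'.+1 then F (k', Y k') else y0.
have HY : forall k, cls (u (m k)) (Y k) by elim => //= k IH; have [] := HF (k, Y k) IH.
have HYS k t : I01 t -> `|Y k t - Y k.+1 t| <= w k.+1.
  by have [_ ] := HF (k, Y k) (HY k); apply.
have HYn k n t : I01 t -> `|Y k t - Y (k + n)%N t| <= w k - w (k + n)%N.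
  move=> It; elim: n => [|n IH]; first by rewrite addn0 !subrr normr0.
  have h1 := ler_distD (Y (k + n)%N t) (Y k t) (Y (k + n.+1)%N t).
  have h2 := HYS (k + n)%N t It; rewrite addnS in h1 *; rewrite wS in h2 *; lra.
have HYle k n t : I01 t -> (k <= n)%N -> `|Y k t - Y n t| <= w k.
  move=> It /subnKC <-; apply: le_trans (HYn _ _ _ It) _.
  by rewrite lerBlDr lerDl ltW.
have cY t : I01 t -> cvg (Y k t @[k --> \oo]).
  move=> It; apply: cauchy_cvg; apply: cauchy_exP => e e0.
  have [K HK] := hw _ e0.
  exists (Y K t); exists K => // k /= Kk.
  rewrite -ball_normE /ball_ /=.
  exact: le_lt_trans (HYle K k t It Kk) (HK K (leqnn K)).
pose y t := lim (Y k t @[k --> \oo]).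
have Hy k t : I01 t -> `|Y k t - y t| <= w k.
  move=> It; apply/ler_addgt0Pr => e e0.
  have /cvgrPdist_lt/(_ _ e0)[K _ HK] := cY t It.
  pose n := maxn k K.
  have h1 := HYle k n t It (leq_maxl k K).
  have h2 : `|y t - Y n t| < e by apply: HK; rewrite /= leq_maxr.
  have h3 := ler_distD (Y n t) (Y k t) (y t).
  rewrite distrC in h2; lra.
have cy : cadlag y := unif_cadlag (fun k => cls_cadlag (HY k)) Hy hw.
pose A := @MkDtilde R d [set z | cadlag z /\ tequiv y z] (ex_intro _ y (conj cy erefl)).
exists A.
apply/cvgrPdist_lt => e e0.
have e20 : 0 < e / 2 by rewrite divr_gt0.
have [K HK] := hw _ e20.
exists (N K) => // n /= Kn.
rewrite sub0r normrN ger0_norm ?dDt_ge0 //.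
have [x [x' [l [Ax Bx' tl Hl]]]] := dDt_lt (HN K n (m K) Kn (mk K)).
have [z [Cz Hz]] := transfer1 Ax Bx' tl Hl (HY K).
have Ay : cls A y by split => //; exact: tequiv_refl.
have := dDt_le (l := id) (e := w K.+1 + w K) Cz Ay (@tc_id R).
have wK := HK K (leqnn K); have := wS K; have := w0 K.
move=> h1 h2 h4; have : dDt (u n) A <= w K.+1 + w K; last by lra.
apply: h4 => t It /=.
apply: le_trans (ler_distD (Y K t) _ _) _; apply: lerD; [exact: Hz | exact: Hy].
Qed.

End U.

Section PL.
Variable R : realType.

Definition clamp (u : R) := Num.min (Num.max u 0) 1.

Lemma clamp0 u : u <= 0 -> clamp u = 0.
Proof. by move=> u0; rewrite /clamp max_r // min_l // ler01. Qed.

Lemma clamp1 u : 1 <= u -> clamp u = 1.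
Proof. by move=> u1; rewrite /clamp max_l ?min_r // (le_trans ler01). Qed.

Lemma clampE u : 0 <= u <= 1 -> clamp u = u.
Proof. by move=> /andP[u0 u1]; rewrite /clamp max_l // min_l. Qed.

Lemma clamp_mono u v : u <= v -> clamp u <= clamp v.
Proof.
move=> uv.
have c0 w : 0 <= clamp w by rewrite /clamp le_min le_max lexx orbT ler01.
have c1 w : clamp w <= 1 by rewrite /clamp ge_min lexx orbT.
case: (leP u 0) => [u0|u0]; first by rewrite clamp0.
case: (leP 1 u) => [u1|u1]; first by rewrite !clamp1 // (le_trans u1).
rewrite clampE ?(ltW u0) ?(ltW u1) //.
case: (leP 1 v) => [v1|v1]; first by rewrite clamp1 // ltW.
by rewrite clampE // (le_trans (ltW u0)) // ltW.
Qed.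

Lemma clamp_strict u v : 0 <= u -> u < 1 -> u < v -> clamp u < clamp v.
Proof.
move=> u0 u1 uv; rewrite (clampE (u := u)) ?u0 ?ltW //.
case: (leP 1 v) => v1; first by rewrite clamp1.
by rewrite clampE // (le_trans u0 (ltW uv)) ltW.
Qed.

Lemma clamp_cont (K J : R) : continuous (fun s : R => clamp (s * K - J)).
Proof.
move=> s; apply: (@continuous_min R R (fun s : R => Num.max (s * K - J) 0) (fun _ => 1)); last exact: cvg_cst.
apply: (@continuous_max R R (fun s : R => s * K - J) (fun _ => 0)); last exact: cvg_cst.
by apply: cvgB; [apply: cvgMl; apply: cvg_id | apply: cvg_cst].
Qed.

Lemma cont_sum n (f : nat -> R -> R) : (forall j, continuous (f j)) ->
  continuous (fun s : R => \sum_(j < n) f j s).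
Proof.
move=> cf; elim: n => [|n IH].
  by under eq_fun do rewrite big_ord0; move=> s; apply: cvg_cst.
under eq_fun do rewrite big_ord_recr /=.
by move=> s; apply: cvgD; [apply: IH | apply: cf].
Qed.

Definition plt (k : nat) (tt : nat -> R) (s : R) :=
  \sum_(j < k) (tt j.+1 - tt j) * clamp (s * k%:R - j%:R).

Lemma plt_grid k tt i : (0 < k)%N -> (i <= k)%N -> plt k tt (i%:R / k%:R) = tt i - tt 0%N.
Proof.
move=> k0 ik; rewrite /plt divfK ?pnatr_eq0 -?lt0n //.
rewrite -(telescope_sumr _ (leq0n i)) big_mkord (big_ord_widen _ (fun j => tt j.+1 - tt j) ik) [RHS]big_mkcond /=.
apply: eq_bigr => j _; case: ltnP => ji.
  by rewrite clamp1 ?mulr1 // lerBrDr addrC natr1 ler_nat.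
by rewrite clamp0 ?mulr0 // subr_le0 ler_nat.
Qed.

Lemma plt0 k tt : plt k tt 0 = 0.
Proof.
rewrite /plt big1 // => j _; rewrite clamp0 ?mulr0 // mul0r sub0r oppr_le0 ler0n //.
Qed.

Lemma plt_cont k tt : continuous (plt k tt).
Proof.
apply: (@cont_sum k (fun j s => (tt j.+1 - tt j) * clamp (s * k%:R - j%:R))) => j s.
by apply: cvgMr; apply: clamp_cont.
Qed.

Lemma plt_mono k tt s s' : (forall j, (j < k)%N -> tt j < tt j.+1) -> s <= s' ->
  plt k tt s <= plt k tt s'.
Proof.
move=> tinc ss; apply: ler_sum => j _; apply: ler_wpM2l.
  by rewrite subr_ge0 ltW // tinc.
by apply: clamp_mono; rewrite lerD2r ler_wpM2r.
Qed.

Lemma plt_strict k tt s s' : (0 < k)%N -> (forall j, (j < k)%N -> tt j < tt j.+1) ->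
  0 <= s -> s < s' -> s < 1 -> plt k tt s < plt k tt s'.
Proof.
move=> k0 tinc s0 ss s1.
have K0 : 0 < k%:R :> R by rewrite ltr0n.
have sK0 : 0 <= s * k%:R by rewrite mulr_ge0 // ltW.
set j0 := Num.truncn (s * k%:R).
have j0k : (j0 < k)%N by rewrite truncn_lt_nat // -[X in _ < X]mul1r ltr_pM2r.
rewrite /plt (bigD1 (Ordinal j0k)) //= [X in _ < X](bigD1 (Ordinal j0k)) //=.
apply: ltr_leD.
  rewrite ltr_pM2l ?subr_gt0 ?tinc //; apply: clamp_strict.
  - by rewrite subr_ge0 truncn_le.
  - by rewrite ltrBlDl natr1 truncnS_gt.
  - by rewrite ltrD2r ltr_pM2r.
apply: ler_sum => j _; apply: ler_wpM2l; first by rewrite subr_ge0 ltW // tinc.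
by apply: clamp_mono; rewrite lerD2r ler_wpM2r // ltW.
Qed.

Lemma plt1 k tt : (0 < k)%N -> plt k tt 1 = tt k - tt 0%N.
Proof. by move=> k0; rewrite -(plt_grid tt k0 (leqnn k)) divff // pnatr_eq0 -lt0n. Qed.

Lemma plt_tc k tt : (0 < k)%N -> tt 0%N = 0 -> tt k = 1 ->
  (forall j, (j < k)%N -> tt j < tt j.+1) -> time_change (plt k tt).
Proof.
move=> k0 t0 tk tinc.
have p0 : plt k tt 0 = 0 by rewrite plt0.
have p1 : plt k tt 1 = 1 by rewrite plt1 // t0 tk subr0.
split; last split.
- by apply: continuous_subspaceT; exact: plt_cont.
- move=> s t /I01E/andP[s0 _] /I01E/andP[_ t1] st; apply: plt_strict => //.
  exact: lt_le_trans st t1.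
- apply/seteqP; split => [_ [s /I01E/andP[s0 s1] <-]|v /I01E/andP[v0 v1]].
  apply/I01E; rewrite -{1}p0 -p1 !plt_mono //.
  have := @IVT R (plt k tt) 0 1 v ler01 (continuous_subspaceT (@plt_cont k tt)).
  rewrite p0 p1 (min_l ler01) (max_r ler01) v0 v1 => /(_ isT)[c cI <-].
  by exists c.
Qed.

Lemma plt_brack k tt i s : (0 < k)%N -> tt 0%N = 0 ->
  (forall j, (j < k)%N -> tt j < tt j.+1) -> (i < k)%N ->
  i%:R / k%:R <= s -> s < i.+1%:R / k%:R -> tt i <= plt k tt s < tt i.+1.
Proof.
move=> k0 t0 tinc ik h1 h2.
have K0 : 0 < k%:R :> R by rewrite ltr0n.
rewrite -[tt i]subr0 -[tt i.+1]subr0 -t0 -(plt_grid tt k0 (ltnW ik)) -(plt_grid tt k0 ik).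
rewrite plt_mono //=; apply: plt_strict => //.
  by apply: le_trans h1; rewrite divr_ge0 // ltW.
by apply: lt_le_trans h2 _; rewrite ler_pdivrMr // mul1r ler_nat.
Qed.

End PL.

Section Sep.
Variables (R : realType) (d : nat).

Lemma mx_norm_le (w : 'rV[R]_d) c : 0 <= c -> (forall i j, `|w i j| <= c) -> `|w| <= c.
Proof.
move=> c0 H; rewrite [leLHS]mx_normrE.
elim/big_ind: _ => //=.
by move=> a b ha hb; rewrite ge_max ha hb.
Qed.

Definition qv (M : nat) (z : 'rV[int]_d) : 'rV[R]_d := map_mx (fun a : int => a%:~R / M.+1%:R) z.
Definition rnd (M : nat) (w : 'rV[R]_d) : 'rV[int]_d := map_mx (fun a : R => Num.floor (a * M.+1%:R)) w.

Lemma rnd_err M w : `|w - qv M (rnd M w)| <= M.+1%:R^-1.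
Proof.
apply: mx_norm_le => [|i j]; first by rewrite invr_ge0.
rewrite !mxE.
set N : R := M.+1%:R; have N0 : 0 < N by rewrite ltr0n.
set a := w i j.
have h1 := Num.Theory.floor_le (a * N); have h2 := Num.Theory.floorD1_gt (a * N).
rewrite intrD in h2.
have -> : a - (Num.floor (a * N))%:~R / N = (a * N - (Num.floor (a * N))%:~R) / N.
  by field; rewrite gt_eqF.
rewrite normrM ger0_norm ?subr_ge0 // ger0_norm ?invr_ge0 ?ltW //.
by rewrite -[X in _ < X]mul1r ltr_pM2r ?invr_gt0 //; lra.
Qed.

Definition stepf (k M : nat) (v : seq 'rV[int]_d) : fn R d := fun s =>
  qv M (nth 0 v (if s < 1 then Num.truncn (s * k.+1%:R) else k.+1)).

Lemma stepf_at k M v i s : (i < k.+1)%N -> i%:R / k.+1%:R <= s -> s < i.+1%:R / k.+1%:R ->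
  stepf k M v s = qv M (nth 0 v i).
Proof.
move=> ik h1 h2; have K0 : 0 < k.+1%:R :> R by rewrite ltr0n.
have s1 : s < 1.
  by apply: lt_le_trans h2 _; rewrite ler_pdivrMr // mul1r ler_nat.
rewrite /stepf s1; congr (qv M (nth 0 v _)); apply: truncn_def.
by rewrite -ler_pdivrMr // h1 -ltr_pdivlMr.
Qed.

Lemma stepf_1 k M v : stepf k M v 1 = qv M (nth 0 v k.+1).
Proof. by rewrite /stepf ltxx. Qed.

Lemma part_find2 (tt : nat -> R) n t : tt 0%N < t -> t <= tt n ->
  exists2 i, (i < n)%N & tt i < t <= tt i.+1.
Proof.
elim: n => [h1 h2|n IH h1 h2]; first by have := lt_le_trans h1 h2; rewrite ltxx.
case: (leP t (tt n)) => tk.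
  by have [i ik Hi] := IH h1 tk; exists i => //; apply: ltnW.
by exists n => //; rewrite tk h2.
Qed.

Lemma stepf_cadlag k M v : cadlag (stepf k M v).
Proof.
have K0 : 0 < k.+1%:R :> R by rewrite ltr0n.
pose g i : R := i%:R / k.+1%:R.
have g0 : g 0%N = 0 by rewrite /g mul0r.
have gk : g k.+1 = 1 by rewrite /g divff // gt_eqF.
split.
- move=> t t0 t1.
  have [i ik /andP[h1 h2]] : exists2 i, (i < k.+1)%N & g i <= t < g i.+1.
    by apply: part_find; rewrite ?g0 ?gk.
  apply/cvgrPdist_lt => e e0.
  have : \forall s \near t^'+, t <= s /\ s < g i.+1.
    by near=> s; split; near: s; [apply: nbhs_right_ge | apply: nbhs_right_lt].
  apply: filterS => s [hs1 hs2].
  by rewrite (stepf_at _ _ ik h1 h2) (stepf_at _ _ ik (le_trans h1 hs1) hs2) subrr normr0.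
- move=> t t0 t1.
  have [i ik /andP[h1 h2]] : exists2 i, (i < k.+1)%N & g i < t <= g i.+1.
    by apply: part_find2; rewrite ?g0 ?gk.
  apply/cvg_ex; exists (qv M (nth 0 v i)); apply/cvgrPdist_lt => e e0.
  have : \forall s \near t^'-, g i < s /\ s < t.
    by near=> s; split; near: s; [apply: nbhs_left_gt | apply: nbhs_left_lt].
  apply: filterS => s [hs1 hs2].
  by rewrite (stepf_at _ _ ik (ltW hs1) (lt_le_trans hs2 h2)) subrr normr0.
Unshelve. all: by end_near. Qed.

Definition Bc (c : nat * nat * seq 'rV[int]_d) : Dtilde R d :=
  @MkDtilde R d [set y | cadlag y /\ tequiv (stepf c.1.1 c.1.2 c.2) y]
    (ex_intro _ (stepf c.1.1 c.1.2 c.2) (conj (stepf_cadlag c.1.1 c.1.2 c.2) erefl)).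

Lemma dDt_separableP : dDt_separable R d.
Proof.
exists (Bc @` setT); split.
  by apply: sub_countable (card_image_le _ _) _; exact: countableP.
move=> A e e0.
have [x Ax] := cls_ne A; have cx := cls_cadlag Ax.
have e30 : 0 < e / 3 by rewrite divr_gt0.
have [k [tt [t0 tk tinc tb]]] := part_cadlag cx e30.
case: k tt t0 tk tinc tb => [|k] tt t0 tk tinc tb.
  by move: (@ltr01 R); rewrite -tk t0 ltxx.
pose M := Num.truncn (e / 3)^-1.
have hM : M.+1%:R^-1 < e / 3.
  rewrite -[X in _ < X]invrK ltf_pV2 ?posrE ?invr_gt0 ?ltr0n //.
  exact: truncnS_gt.
pose v := [seq rnd M (x (tt i)) | i <- iota 0 k.+2].
have nv i : (i < k.+2)%N -> nth 0 v i = rnd M (x (tt i)).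
  by move=> ik; rewrite (nth_map 0%N) ?size_iota // nth_iota.
exists (Bc (k, M, v)); first by exists (k, M, v).
have yB : cls (Bc (k, M, v)) (stepf k M v) by split; [exact: stepf_cadlag | exact: tequiv_refl].
have tl := plt_tc (ltn0Sn k) t0 tk tinc.
apply: le_lt_trans (dDt_le (e := e / 3 + e / 3) Ax yB tl _) _; last first.
  lra.
move=> t /I01E/andP[tt0 t1].
have K0 : 0 < k.+1%:R :> R by rewrite ltr0n.
move: t1; rewrite le_eqVlt => /predU1P[->|t1].
  have -> : plt k.+1 tt 1 = tt k.+1 by rewrite plt1 // t0 subr0.
  rewrite stepf_1 nv //.
  apply: le_trans (rnd_err _ _) _; apply: (le_trans (ltW hM)); rewrite lerDr ltW //.
pose g i : R := i%:R / k.+1%:R.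
have [i ik /andP[h1 h2]] : exists2 i, (i < k.+1)%N & g i <= t < g i.+1.
  apply: part_find; rewrite /g ?mul0r ?divff ?gt_eqF //.
rewrite (stepf_at _ _ ik h1 h2) nv; last exact: (ltn_trans ik).
have /andP[p1 p2] := plt_brack (ltn0Sn k) t0 tinc ik h1 h2.
apply: le_trans (ler_distD (x (tt i)) _ _) _; apply: lerD.
  by apply: tb.
by apply: le_trans (rnd_err _ _) (ltW hM).
Qed.

End Sep.


Theorem lemmaA2 (R : realType) (d : nat) :
  dDt_separable R d /\ dDt_complete R d.
Proof. by split; [exact: dDt_separableP | exact: dDt_completeP]. Qed.
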